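(* Let $G=(V,R,E)$ be a finite bipartite version–record graph, let $\mathbb{T}=(V,\mathbb{E})$ be a version tree on $V$ satisfying the standing assumptions below, and let $\delta\le 1$ be a positive parameter. If every edge $(v_i,v_j)\in\mathbb{E}$ has weight $w(v_i,v_j)>\delta|R|$, then the checkout cost when all versions are placed in one single partition, namely $\mathcal{C}_{avg}=|R|$, satisfies $\mathcal{C}_{avg}<\frac{1}{\delta}\cdot\frac{|E|}{|V|}$.
   Context: Versions $V=\{v_1,\dots,v_n\}$ and records $R$; $(v,r)\in E$ means version $v$ contains record $r$; $R(v)=\{r:(v,r)\in E\}$, and every record lies in some version, so $R=\bigcup_{v\in V}R(v)$. The version tree $\mathbb{T}$ is a rooted tree on vertex set $V$ whose edges go from a parent version to a child version (derivation relation); the weight of an edge is $w(v_i,v_j)=|R(v_i)\cap R(v_j)|$. Standing assumption (no cross-version diff rule): a record of a version that is not contained in its parent is a newly created record, i.e., for every record $r$ the set of versions containing $r$ is a connected subtree of $\mathbb{T}$. If all versions form one partition, the checkout cost of each version is $|R|$, so the average checkout cost is $|R|$. *)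

(* Defs.v *)
From mathcomp Require Import all_boot all_order all_algebra.
Set Implicit Arguments. Unset Strict Implicit. Unset Printing Implicit Defensive.

(* Version-record bipartite graph: versions V, records Rec (finite types),
   contains v r <-> (v, r) \in E. *)

Definition recs_of (V Rec : finType) (contains : V -> Rec -> bool) (v : V)
  : {set Rec} := [set r | contains v r].

Definition edge_set (V Rec : finType) (contains : V -> Rec -> bool)
  : {set V * Rec} := [set p | contains p.1 p.2].

Definition weight (V Rec : finType) (contains : V -> Rec -> bool) (u v : V)
  : nat := #|recs_of contains u :&: recs_of contains v|.

(* A rooted tree on V given by its root and parent map: the root is its own
   parent, and every vertex reaches the root by iterating the parent map.
   Tree edges are (parent v, v) for v != root. *)
Definition rooted_tree (V : finType) (root : V) (parent : V -> V) : Prop :=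
  parent root = root /\ forall v : V, exists n, iter n parent v = root.

Definition tree_edge (V : finType) (root : V) (parent : V -> V) (u v : V)
  : bool := (v != root) && (parent v == u).

Definition tree_adj (V : finType) (root : V) (parent : V -> V) : rel V :=
  fun u v => tree_edge root parent u v || tree_edge root parent v u.

Definition records_covered (V Rec : finType) (contains : V -> Rec -> bool)
  : Prop := forall r : Rec, exists v : V, contains v r.

(* Standing assumption (no cross-version diff): for every record r, the set
   of versions containing r induces a connected subtree of the version tree. *)
Definition record_subtrees_connected (V Rec : finType)
  (contains : V -> Rec -> bool) (root : V) (parent : V -> V) : Prop :=
  forall (r : Rec) (x y : V), contains x r -> contains y r ->
    connect (fun a b => [&& tree_adj root parent a b, contains a r
                           & contains b r]) x y.

(* Main.v *)
Require Import Defs.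
From mathcomp Require Import all_boot all_order all_algebra.
Import Order.TTheory GRing.Theory Num.Theory.
Local Open Scope ring_scope.

Lemma card_edge (V Rec : finType) (contains : V -> Rec -> bool) :
  #|edge_set contains| = (\sum_v #|recs_of contains v|)%N.
Proof.
rewrite -sum1_card big_mkcond /=.
rewrite (eq_bigr (fun v => \sum_r (if contains v r then 1 else 0))%N); last first.
  by move=> v _; rewrite -sum1_card big_mkcond /=; apply: eq_bigr => r _; rewrite /recs_of inE.
rewrite pair_bigA /=; apply: eq_bigr => -[v r] _.
by rewrite /edge_set inE.
Qed.

Lemma root_child (V : finType) (root : V) (parent : V -> V) :
  forall n v, v != root -> iter n parent v = root ->
  exists c, c != root /\ parent c = root.
Proof.
elim=> [|n IH] v Hv; first by move=> /= E; rewrite E eqxx in Hv.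
rewrite iterSr => E.
case: (eqVneq (parent v) root) => Hp; first by exists v.
by apply: (IH (parent v)).
Qed.

Theorem lemma1 (F : realFieldType) (V Rec : finType)
  (contains : V -> Rec -> bool) (root : V) (parent : V -> V) (delta : F) :
  rooted_tree root parent ->
  records_covered contains ->
  record_subtrees_connected contains root parent ->
  (1 < #|V|)%N ->
  0 < delta -> delta <= 1 ->
  (forall u v : V, tree_edge root parent u v ->
     delta * #|Rec|%:R < (weight contains u v)%:R) ->
  (#|Rec|%:R : F) < delta^-1 * ((#|edge_set contains|)%:R / (#|V|)%:R).
Proof.
move=> [_ Hreach] _ _ HV dpos _ Hw.
have wl u v : (weight contains u v <= #|recs_of contains u|)%N.
  by apply: subset_leq_card; apply: subsetIl.
have wr u v : (weight contains u v <= #|recs_of contains v|)%N.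
  by apply: subset_leq_card; apply: subsetIr.
have Hall v : delta * #|Rec|%:R < (#|recs_of contains v|)%:R :> F.
  case: (eqVneq v root) => [->|Hv].
    have [x Hx] : exists x, x != root.
      apply/existsP; rewrite -negb_forall; apply/negP => /forallP H.
      have : (#|V| <= 1)%N.
        rewrite -(cards1 root); apply: subset_leq_card.
        by apply/subsetP => y _; rewrite inE; apply: H.
      by rewrite leqNgt HV.
    have [n Hn] := Hreach x.
    have [c [Hc Hpc]] := @root_child V root parent n x Hx Hn.
    apply: (lt_le_trans (Hw root c _)); first by rewrite /tree_edge Hc Hpc eqxx.
    by rewrite ler_nat.
  apply: (lt_le_trans (Hw (parent v) v _)); first by rewrite /tree_edge Hv eqxx.
  by rewrite ler_nat.
have Hsum : \sum_(v : V) delta * #|Rec|%:R < \sum_(v : V) (#|recs_of contains v|)%:R :> F.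
  apply: ltr_sum => //.
  by apply/hasP; exists root; rewrite ?mem_index_enum.
rewrite sumr_const card_edge natr_sum -/(#|V|) in Hsum *.
have Vpos : 0 < (#|V|)%:R :> F by rewrite ltr0n; apply: ltn_trans HV.
rewrite mulrA ltr_pdivlMr // mulrC ltr_pdivlMl // mulrC -mulr_natr mulrA.
by rewrite mul1r mulr_natr.
Qed.
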